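(* Let $G$ be a torsion-free group, $\mathbb{F}$ a field, $\alpha$ a zero divisor in $\mathbb{F}[G]$ with $supp(\alpha)=\{1,x,y,xy\}$ where $x,y$ are distinct non-trivial elements of $G$, and let $\beta$ be a mate of $\alpha$. Then $|supp(\alpha)supp(\beta)|\le 2|supp(\beta)|-2$.
   Context: $supp(\gamma)=\{x\in G:\gamma_x\ne0\}$; for subsets $B,C\subseteq G$, $BC=\{bc:b\in B,c\in C\}$. A mate of $\alpha$ is a non-zero $\beta$ with $\alpha\beta=0$ such that $|supp(\beta)|\le|supp(\beta')|$ for every non-zero $\beta'$ with $\alpha\beta'=0$. *)

(* Defs.v *)
From HB Require Import structures.
From mathcomp Require Import all_boot all_order all_algebra.
From mathcomp Require Export finmap.
Set Implicit Arguments. Unset Strict Implicit. Unset Printing Implicit Defensive.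
Import GRing.Theory.
Local Open Scope fset_scope.

Record group_laws (G : choiceType) (mul : G -> G -> G) (one : G) (inv : G -> G)
  : Prop := GroupLaws {
  g_assoc : forall a b c, mul a (mul b c) = mul (mul a b) c;
  g_mul1 : forall a, mul one a = a;
  g_1mul : forall a, mul a one = a;
  g_mulV : forall a, mul (inv a) a = one;
  g_Vmul : forall a, mul a (inv a) = one }.

Definition gpow (G : Type) (mul : G -> G -> G) (one : G) (g : G) (n : nat) : G :=
  iter n (mul g) one.

Definition torsion_free (G : choiceType) (mul : G -> G -> G) (one : G) : Prop :=
  forall (g : G) (n : nat), gpow mul one g n.+1 = one -> g = one.

Record grpalg (G : choiceType) (F : nzRingType) := GrpAlg {
  ga_fun :> G -> F;
  supp : {fset G};
  suppP : forall g, (g \in supp) = (ga_fun g != 0%R) }.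

Definition ga_mul_at (G : choiceType) (F : nzRingType) (mul : G -> G -> G)
  (inv : G -> G) (a b : grpalg G F) (g : G) : F :=
  (\sum_(h <- supp a) a h * b (mul (inv h) g))%R.

Definition ga_mul_eq0 (G : choiceType) (F : nzRingType) (mul : G -> G -> G)
  (inv : G -> G) (a b : grpalg G F) : Prop :=
  forall g, ga_mul_at mul inv a b g = 0%R.

Definition ga_nonzero (G : choiceType) (F : nzRingType) (a : grpalg G F) : Prop :=
  supp a != fset0.

Definition zero_divisor (G : choiceType) (F : nzRingType) (mul : G -> G -> G)
  (inv : G -> G) (a : grpalg G F) : Prop :=
  ga_nonzero a /\ exists c : grpalg G F,
    ga_nonzero c /\ (ga_mul_eq0 mul inv a c \/ ga_mul_eq0 mul inv c a).

Definition mate (G : choiceType) (F : nzRingType) (mul : G -> G -> G)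
  (inv : G -> G) (a b : grpalg G F) : Prop :=
  ga_nonzero b /\ ga_mul_eq0 mul inv a b /\
  forall b' : grpalg G F, ga_nonzero b' -> ga_mul_eq0 mul inv a b' ->
    #|` supp b| <= #|` supp b'|.

Definition setmul (G : choiceType) (mul : G -> G -> G) (B C : {fset G}) : {fset G} :=
  [fset mul b c | b in B, c in C].

(* Main.v *)
Require Import Defs.
From mathcomp Require Import all_boot all_order all_algebra.
From mathcomp Require Import finmap zify ring.
From Stdlib Require Import Classical.
Local Open Scope fset_scope.
Local Open Scope nat_scope.
Set Implicit Arguments. Unset Strict Implicit.

Lemma mulKg {G : choiceType} {mul : G -> G -> G} {one : G} {inv : G -> G} :
  group_laws mul one inv -> forall a b, mul (inv a) (mul a b) = b.
Proof. by case=> As M1 _ MV _ a b; rewrite As MV M1. Qed.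
Lemma mulVKg {G : choiceType} {mul : G -> G -> G} {one : G} {inv : G -> G} :
  group_laws mul one inv -> forall a b, mul a (mul (inv a) b) = b.
Proof. by case=> As M1 _ _ VM a b; rewrite As VM M1. Qed.
Lemma mulgI {G : choiceType} {mul : G -> G -> G} {one : G} {inv : G -> G} :
  group_laws mul one inv -> forall a b c, mul a b = mul a c -> b = c.
Proof. by move=> GL a b c E; rewrite -(mulKg GL a b) E (mulKg GL). Qed.
Lemma mulIg {G : choiceType} {mul : G -> G -> G} {one : G} {inv : G -> G} :
  group_laws mul one inv -> forall a b c, mul b a = mul c a -> b = c.
Proof.
case=> As M1 M1' MV VM a b c E.
by rewrite -(M1' b) -(VM a) As E -As VM M1'.
Qed.
Lemma inv_uniq {G : choiceType} {mul : G -> G -> G} {one : G} {inv : G -> G} :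
  group_laws mul one inv -> forall u w, mul u w = one -> u = inv w.
Proof.
move=> GL u w E; apply: (mulIg GL (a:=w)); rewrite E.
by case: GL.
Qed.
Lemma inv1 {G : choiceType} {mul : G -> G -> G} {one : G} {inv : G -> G} :
  group_laws mul one inv -> inv one = one.
Proof. by move=> GL; symmetry; apply: (inv_uniq GL); case: GL. Qed.
Lemma invM {G : choiceType} {mul : G -> G -> G} {one : G} {inv : G -> G} :
  group_laws mul one inv -> forall u w, inv (mul u w) = mul (inv w) (inv u).
Proof.
move=> GL u w; symmetry; apply: (inv_uniq GL).
case: (GL) => As _ _ _ _; rewrite -As (mulKg GL); by case: GL.
Qed.

Lemma gpowS {G : choiceType} (mul : G -> G -> G) (one : G) (z : G) n :
  gpow mul one z n.+1 = mul z (gpow mul one z n).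
Proof. by []. Qed.
Lemma gpowD {G : choiceType} {mul : G -> G -> G} {one : G} {inv : G -> G} :
  group_laws mul one inv -> forall z m n,
  gpow mul one z (m + n) = mul (gpow mul one z m) (gpow mul one z n).
Proof.
case=> As M1 _ _ _ z m n; elim: m => [|m IH]; first by rewrite /= M1.
by rewrite addSn !gpowS IH As.
Qed.
Lemma gpow_comm {G : choiceType} {mul : G -> G -> G} {one : G} {inv : G -> G} :
  group_laws mul one inv -> forall z n,
  mul z (gpow mul one z n) = mul (gpow mul one z n) z.
Proof.
move=> GL z n; rewrite -gpowS -addn1 (gpowD GL) /=.
by case: GL => _ _ M1' _ _; rewrite M1'.
Qed.

Lemma gpow_inj {G : choiceType} {mul : G -> G -> G} {one : G} {inv : G -> G} :
  group_laws mul one inv -> torsion_free mul one -> forall z b, z != one ->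
  forall i j, mul (gpow mul one z i) b = mul (gpow mul one z j) b -> i = j.
Proof.
move=> GL TF z b z1.
suff H : forall i j, i < j -> mul (gpow mul one z i) b <> mul (gpow mul one z j) b.
  move=> i j E; case: (ltngtP i j) => // ij; first by case: (H _ _ ij).
  by case: (H _ _ ij).
move=> i j ij E.
have Ej : j = (j - i.+1).+1 + i by rewrite addSn -addnS subnK.
move: E; rewrite Ej (gpowD GL).
case: (GL) => As M1 _ _ _; rewrite -As -{1}(M1 (mul (gpow mul one z i) b)).
move=> /(mulIg GL) E2.
by move: z1; rewrite (TF z (j - i.+1)) ?eqxx // -E2.
Qed.

Lemma top {G : choiceType} {mul : G -> G -> G} {one : G} {inv : G -> G} :
  group_laws mul one inv -> torsion_free mul one -> forall (z b : G) (S : {fset G}),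
  z != one -> b \in S -> exists k, mul (gpow mul one z k) b \in S /\
   forall m, mul (gpow mul one z m.+1) (mul (gpow mul one z k) b) \notin S.
Proof.
move=> GL TF z b S z1 bS.
set f := fun i => mul (gpow mul one z i) b.
have finj : injective f by move=> i j; apply: (gpow_inj GL TF z1).
have fadd : forall m k, mul (gpow mul one z m) (f k) = f (m + k).
  by move=> m k; rewrite /f (gpowD GL); case: GL => As _ _ _ _; rewrite As.
apply: NNPP => H.
have H' : forall k, f k \in S -> exists m, f (m.+1 + k) \in S.
  move=> k fk; apply: NNPP => Hn; apply: H; exists k; split => // m.
  rewrite fadd; apply/negP => Hm; apply: Hn; by exists m.
have C : forall N, exists k s, [/\ f k \in S, size s = N, uniq s,
    all (fun i => i <= k) s & all (fun i => f i \in S) s].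
  elim=> [|N [k [s [fk sz us sk sS]]]].
    exists 0, [::]; split => //; rewrite /f /=; by case: GL => _ -> _ _ _.
  have [m fm] := H' k fk.
  exists (m.+1 + k), ((m.+1 + k) :: s); split => //=.
  - by rewrite sz.
  - rewrite us andbT; apply/negP => kin.
    move/allP: sk => /(_ _ kin); rewrite leqNgt; apply/negP/negPn.
    by rewrite addSn ltnS leq_addl.
  - rewrite leqnn /=; apply/allP => i /(allP sk) ik.
    by apply: (leq_trans ik); rewrite leq_addl.
  - by rewrite fm.
have [k [s [_ sz us _ sS]]] := C (#|` S|).+1.
have : size (map f s) <= size (enum_fset S).
  apply: uniq_leq_size; first by rewrite map_inj_uniq.
  by move=> v /mapP [i /(allP sS) iS ->].
by rewrite size_map sz ltnn.
Qed.

Lemma no_inv_set {G : choiceType} {mul : G -> G -> G} {one : G} {inv : G -> G} :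
  group_laws mul one inv -> torsion_free mul one -> forall (z b : G) (S : {fset G}),
  z != one -> b \in S -> (forall c, c \in S -> mul z c \in S) -> False.
Proof.
move=> GL TF z b S z1 bS H.
have [k [kS kN]] := top GL TF z1 bS.
have g1 : gpow mul one z 1 = z by rewrite /gpow /=; case: GL => _ _ -> _ _.
by move: (kN 0); rewrite g1 H.
Qed.

Lemma gpowSm {G : choiceType} {mul : G -> G -> G} {one : G} {inv : G -> G} :
  group_laws mul one inv -> forall z n c,
  mul (gpow mul one z n.+1) c = mul z (mul (gpow mul one z n) c).
Proof. by case=> As _ _ _ _ z n c; rewrite gpowS As. Qed.
Lemma gpow0m {G : choiceType} {mul : G -> G -> G} {one : G} {inv : G -> G} :
  group_laws mul one inv -> forall z c, mul (gpow mul one z 0) c = c.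
Proof. by case=> _ M1 _ _ _ z c. Qed.

Lemma lead_contra {G : choiceType} {mul : G -> G -> G} {one : G} {inv : G -> G}
  (F : fieldType) :
  group_laws mul one inv -> torsion_free mul one -> forall (x : G) (j : nat)
  (a1 ax ay axy : F) (beta : G -> F) (B : {fset G}) (b0 : G),
  x != one -> axy != 0%R ->
  (forall g, (g \in B) = (beta g != 0%R)) -> b0 \in B ->
  (forall g, (a1 * beta g + ax * beta (mul (inv x) g) +
     ay * beta (mul (inv (gpow mul one x j.+1)) g) +
     axy * beta (mul (inv (mul x (gpow mul one x j.+1))) g) = 0)%R) -> False.
Proof.
move=> GL TF x j a1 ax ay axy beta B b0 x1 axy0 Bm b0B H.
have nB : forall g, g \notin B -> beta g = 0%R.
  by move=> g; rewrite Bm => /negPn/eqP.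
have [k [kB kN]] := top GL TF x1 b0B.
set c := mul (gpow mul one x k) b0 in kB kN.
set y := gpow mul one x j.+1 in H.
move: (H (mul (mul x y) c)).
rewrite (mulKg GL).
have E1 : mul (mul x y) c = mul (gpow mul one x j.+2) c.
  by rewrite (gpowSm GL); case: GL => As _ _ _ _; rewrite As.
have E2 : mul (inv x) (mul (mul x y) c) = mul (gpow mul one x j.+1) c.
  by case: (GL) => As _ _ _ _; rewrite -As (mulKg GL).
have E3 : mul (inv y) (mul (mul x y) c) = mul (gpow mul one x 1) c.
  rewrite /y (gpow_comm GL); case: (GL) => As _ _ _ _; rewrite -As (mulKg GL).
  by rewrite (gpowSm GL) (gpow0m GL).
rewrite E2 E3 E1 (nB _ (kN j.+1)) (nB _ (kN j)) (nB _ (kN 0)).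
rewrite !GRing.mulr0 !GRing.add0r => /eqP.
rewrite GRing.mulf_eq0 (negbTE axy0) /=; apply/negP; rewrite -Bm; exact: kB.
Qed.

Lemma main4 {G : choiceType} {mul : G -> G -> G} {one : G} {inv : G -> G}
  (F : fieldType) :
  group_laws mul one inv -> torsion_free mul one -> forall (x y : G)
  (a1 ax ay axy : F) (beta : G -> F) (B : {fset G}) (b0 : G),
  x != one -> y != one -> a1 != 0%R -> ax != 0%R -> ay != 0%R -> axy != 0%R ->
  (forall g, (g \in B) = (beta g != 0%R)) -> b0 \in B ->
  (forall g, (a1 * beta g + ax * beta (mul (inv x) g) +
     ay * beta (mul (inv y) g) +
     axy * beta (mul (inv (mul x y)) g) = 0)%R) ->
  #|` setmul mul [fset one; x; y; mul x y] B| <= 2 * #|` B| - 2.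
Proof.
move=> GL TF x y a1 ax ay axy beta B b0 x1 y1 a10 ax0 ay0 axy0 Bm b0B H.
have As := g_assoc GL.
have nB : forall g, g \notin B -> beta g = 0%R.
  by move=> g; rewrite Bm => /negPn/eqP.
have inB : forall g, g \in B -> beta g != 0%R by move=> g; rewrite Bm.
set yB := [fset mul y c | c in B].
have yBP : forall g, (g \in yB) = (mul (inv y) g \in B).
  move=> g; apply/imfsetP/idP => [[c cB ->]|gB]; first by rewrite (mulKg GL).
  by exists (mul (inv y) g) => //; rewrite (mulVKg GL).
set D := B `|` yB.
set I := B `&` yB.
have DP : forall g, (g \in D) = (g \in B) || (g \in yB) by move=> g; rewrite /D in_fsetU.
have IP : forall g, (g \in I) = (g \in B) && (g \in yB) by move=> g; rewrite /I in_fsetI.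
set gam := fun g => (a1 * beta g + ay * beta (mul (inv y) g))%R.
set del := fun g => (ax * beta g + axy * beta (mul (inv y) g))%R.
have K1 : forall g, (gam g + del (mul (inv x) g) = 0)%R.
  move=> g; rewrite -(H g) /gam /del (invM GL) -As; ring.
have K3 : forall g, g \notin D -> gam g = 0%R /\ del g = 0%R.
  move=> g; rewrite DP negb_or yBP => /andP [gB gyB].
  by rewrite /gam /del !nB // !GRing.mulr0 GRing.addr0.
have K4 : forall g, g \in D -> g \notin I -> gam g != 0%R /\ del g != 0%R.
  move=> g; rewrite DP IP !yBP; case gB: (g \in B); case gyB: (_ \in B) => //= _ _.
    rewrite /gam /del (nB _ (negbT gyB)) !GRing.mulr0 !GRing.addr0.
    by rewrite !GRing.mulf_neq0 ?inB.
  rewrite /gam /del (nB _ (negbT gB)) !GRing.mulr0 !GRing.add0r.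
  by rewrite !GRing.mulf_neq0 ?inB.
have K5 : forall g, g \in I -> beta g != 0%R /\ beta (mul (inv y) g) != 0%R.
  by move=> g; rewrite IP yBP => /andP [/inB -> /inB ->].
set xD := [fset mul x d | d in D].
set SG := [fset g in D | gam g != 0%R].
set SD := [fset g in D | del g != 0%R].
have SGP' : forall g, (g \in SG) = (g \in D) && (gam g != 0%R) by move=> g; rewrite inE.
have SDP' : forall g, (g \in SD) = (g \in D) && (del g != 0%R) by move=> g; rewrite inE.
have SGP : forall g, (g \in SG) = (gam g != 0%R).
  move=> g; rewrite SGP'; case: (boolP (g \in D)) => gD //=.
  by have [-> _] := K3 g gD; rewrite eqxx.
have SDP : forall g, (g \in SD) = (del g != 0%R).
  move=> g; rewrite SDP'; case: (boolP (g \in D)) => gD //=.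
  by have [_ ->] := K3 g gD; rewrite eqxx.
have SGD : forall g, g \in SG -> g \in D by move=> g; rewrite SGP' => /andP [].
have SDD : forall g, g \in SD -> g \in D by move=> g; rewrite SDP' => /andP [].
have c1 : #|` setmul mul [fset one; x; y; mul x y] B| <= #|` D `|` xD|.
  apply: fsubset_leq_card; apply/fsubsetP => g /imfset2P [h hA [c cB ->]].
  move: hA; rewrite !inE -!orbA => /or4P [] /eqP ->.
  - by rewrite (g_mul1 GL) cB.
  - by apply/or3P; apply: Or33; apply: in_imfset; rewrite /= DP cB.
  - by rewrite yBP (mulKg GL) cB orbT.
  - rewrite -As; apply/or3P; apply: Or33; apply: in_imfset.
    by rewrite /= DP yBP (mulKg GL) cB orbT.
have c2a := cardfsUI D xD.
have c2b := cardfsID xD D.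
have c3 : #|` xD| <= #|` D| by apply: leq_imfset_card.
have c3' : #|` yB| <= #|` B| by apply: leq_imfset_card.
have c4 : #|` D `\` xD| <= #|` I `\` SG|.
  apply: fsubset_leq_card; apply/fsubsetP => g; rewrite inE => /andP [gxD gD].
  have gam0 : gam g = 0%R.
    have : mul (inv x) g \notin D.
      apply: contra gxD => igD; apply/imfsetP; exists (mul (inv x) g) => //.
      by rewrite (mulVKg GL).
    move=> /K3 [_ d0]; by move: (K1 g); rewrite d0 GRing.addr0.
  rewrite inE SGP gam0 eqxx /=.
  apply: contraT => gI; have [] := K4 g gD gI; by rewrite gam0 eqxx.
have c5 : #|` D| + #|` I| = #|` B| + #|` yB| := cardfsUI B yB.
have c6 := cardfsID SG I.
suff c7 : 2 <= #|` I `&` SG| by lia.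
rewrite leqNgt; apply/negP => Hlt.
have SGx : forall g, g \in SD -> mul x g \in SG.
  move=> g; rewrite SDP SGP => dg; move: (K1 (mul x g)); rewrite (mulKg GL).
  move=> E; apply: contra dg => /eqP g0; move: E; rewrite g0 GRing.add0r => ->.
  by [].
have SDx : forall g, g \in SG -> mul (inv x) g \in SD.
  move=> g; rewrite SDP SGP => dg; move: (K1 g) => E; apply: contra dg => /eqP g0.
  by move: E; rewrite g0 GRing.addr0 => ->.
have cSG : #|` SG| <= #|` SD|.
  apply: (leq_trans _ (leq_imfset_card _ (fun g => mul x g) (mem SD))).
  apply: fsubset_leq_card; apply/fsubsetP => g gS; apply/imfsetP.
  exists (mul (inv x) g); first by apply: SDx.
  by rewrite (mulVKg GL).
have cSD : #|` SD| <= #|` SG|.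
  apply: (leq_trans _ (leq_imfset_card _ (fun g => mul (inv x) g) (mem SG))).
  apply: fsubset_leq_card; apply/fsubsetP => g gS; apply/imfsetP.
  exists (mul x g); first by apply: SGx.
  by rewrite (mulKg GL).
have eSG : SG `\` I = D `\` I.
  apply/fsetP => g; rewrite !in_fsetD SGP'.
  case: (boolP (g \in I)) => gI //=; case: (boolP (g \in D)) => gD //=.
  by have [-> _] := K4 g gD gI.
have eSD : SD `\` I = D `\` I.
  apply/fsetP => g; rewrite !in_fsetD SDP'.
  case: (boolP (g \in I)) => gI //=; case: (boolP (g \in D)) => gD //=.
  by have [_ ->] := K4 g gD gI.
have c8 := cardfsID I SG.
have c9 := cardfsID I SD.
have c10 : #|` SG `&` I| = #|` SD `&` I|.
  move: c8 c9; rewrite eSG eSD; lia.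
have [g0 g0yB g0B] : exists2 g, g \in yB & g \notin B.
  apply: NNPP => Hn; apply: (no_inv_set GL TF y1 b0B) => c cB.
  apply: NNPP => Hc; apply: Hn; exists (mul y c) => //; last by apply/negP.
  by rewrite yBP (mulKg GL).
have g0SG : g0 \in SG.
  have g0D : g0 \in D by rewrite inE g0yB orbT.
  have g0I : g0 \notin I by rewrite inE (negbTE g0B).
  by rewrite SGP; have [] := K4 g0 g0D g0I.
have SGSD : SG = SD -> False.
  move=> E; apply: (no_inv_set GL TF x1 g0SG) => c cS.
  by apply: SGx; rewrite -E.
have [det0|det1] := eqVneq (a1 * axy - ay * ax)%R 0%R.
  apply: SGSD; apply/fsetP => g; rewrite SGP SDP.
  have -> : del g = (ax / a1 * gam g)%R.
    rewrite /del /gam GRing.mulrDr !GRing.mulrA GRing.mulfVK //.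
    congr (_ + _)%R; congr (_ * _)%R.
    apply: (GRing.mulfI a10).
    move/eqP: det0; rewrite GRing.subr_eq0 => /eqP ->; field.
    exact: a10.
  by rewrite GRing.mulf_eq0 GRing.mulf_eq0 GRing.invr_eq0 (negbTE ax0) (negbTE a10).
have [eqI|neqI] := eqVneq (SG `&` I) (SD `&` I).
  apply: SGSD; apply/fsetP => g.
  have := congr1 (fun S => g \in S) eqI.
  have := congr1 (fun S => g \in S) eSD; have := congr1 (fun S => g \in S) eSG.
  rewrite /= !in_fsetD !in_fsetI ?IP.
  case: (g \in B); case: (g \in yB); rewrite /= ?andbT ?andbF //.
  by move=> -> ->.
  by move=> -> ->.
  by move=> -> ->.
have Hlt' : #|` SG `&` I| <= 1 by rewrite fsetIC -ltnS.
have sz1 : #|` SG `&` I| = 1.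
  move: Hlt'; rewrite leq_eqVlt ltnS leqn0 => /orP [/eqP //|/eqP z0].
  exfalso; move/eqP: neqI; apply.
  by rewrite (cardfs0_eq z0) (cardfs0_eq (esym (etrans (esym z0) c10))).
have [e2 E2] : exists e, SG `&` I = [fset e] by apply/cardfs1P/eqP.
have [e1 E1] : exists e, SD `&` I = [fset e] by apply/cardfs1P/eqP; rewrite -c10.
have e12 : e1 != e2 by apply: contra neqI => /eqP e12; rewrite E1 E2 e12.
have e1SD : e1 \in SD `&` I by rewrite E1 in_fset1.
have e2SG : e2 \in SG `&` I by rewrite E2 in_fset1.
rewrite in_fsetI in e1SD; rewrite in_fsetI in e2SG.
move: e1SD e2SG => /andP [e1SD e1I] /andP [e2SG e2I].
have e1SG : e1 \notin SG.
  apply/negP => e1SG; move: e12; suff: e1 \in SG `&` I by rewrite E2 in_fset1 => ->.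
  by rewrite in_fsetI e1SG e1I.
have detl : forall d, d \in I -> gam d = 0%R -> del d = 0%R -> False.
  move=> d dI gz d0; have [bd _] := K5 d dI.
  have : ((a1 * axy - ay * ax) * beta d = axy * gam d - ay * del d)%R.
    by rewrite /gam /del; ring.
  rewrite gz d0 !GRing.mulr0 GRing.subr0 => /eqP.
  by rewrite GRing.mulf_eq0 (negbTE det1) (negbTE bd).
have P1 : forall d, d \in D -> d != e2 -> mul x d \in D /\ mul x d != e1.
  move=> d dD de2.
  have dSD : d \in SD.
    case: (boolP (d \in I)) => dI; last by rewrite SDP; have [] := K4 d dD dI.
    rewrite SDP; apply/negP => /eqP d0; move: de2.
    have gd : gam d != 0%R by apply/negP => /eqP gz; apply: (detl d dI gz d0).
    suff: d \in SG `&` I by rewrite E2 in_fset1 => ->.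
    by rewrite in_fsetI SGP gd dI.
  have := SGx d dSD => xdSG; split; first exact: SGD.
  by apply: contraNneq e1SG => <-.
have e1D : e1 \in D by apply: SDD.
have [k [kD kN]] := top GL TF x1 e1D.
have g1 : forall c, mul (gpow mul one x 1) c = mul x c.
  by move=> c; rewrite (gpowSm GL) (gpow0m GL).
have ke2 : mul (gpow mul one x k) e1 = e2.
  apply/eqP; apply: contraT => ne.
  have [xD' _] := P1 _ kD ne.
  by move: (kN 0); rewrite g1 xD'.
set Q := [fset q in D | [forall i : 'I_k.+1, q != mul (gpow mul one x i) e1]].
have QP : forall q, (q \in Q) =
    (q \in D) && [forall i : 'I_k.+1, q != mul (gpow mul one x i) e1].
  by move=> q; rewrite inE.
have ye1D : mul y e1 \in D.
  by rewrite DP yBP (mulKg GL); move: e1I; rewrite IP => /andP [-> _]; rewrite orbT.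
case: (boolP (mul y e1 \in Q)) => ye1Q.
  apply: (no_inv_set GL TF x1 ye1Q) => q; rewrite !QP => /andP [qD /forallP qN].
  have qe2 : q != e2 by rewrite -ke2; exact: (qN ord_max).
  have [xqD xqe1] := P1 q qD qe2.
  rewrite xqD /=; apply/forallP => -[[|i] Hi] /=.
    by rewrite (gpow0m GL).
  rewrite (gpowSm GL); apply: contra_neq (qN (Ordinal (ltnW Hi))) => /=.
  exact: (mulgI GL).
move: ye1Q; rewrite QP ye1D /= => /forallPn [i].
rewrite negbK => /eqP /(mulIg GL) Ey.
move: Ey H; case: i => [[|j] Hj] /= Ey H.
  by move: y1; rewrite Ey eqxx.
by rewrite Ey in H; apply: (lead_contra GL TF x1 axy0 Bm b0B H).
Unshelve. all: exact tt.
Qed.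

Lemma sum4 {G : choiceType} (R : nzRingType) (F : G -> R) (p q r t : G) :
  p != q -> p != r -> p != t -> q != r -> q != t -> r != t ->
  (\sum_(h <- [fset p; q; r; t]) F h = F p + F q + F r + F t)%R.
Proof.
move=> pq pr pt qr qt rt.
have -> : [fset p; q; r; t] = p |` (q |` (r |` [fset t])).
  by apply/fsetP => h; rewrite !inE -!orbA.
rewrite big_fsetU1; last by rewrite !inE negb_or pq negb_or pr pt.
rewrite big_fsetU1; last by rewrite !inE negb_or qr qt.
rewrite big_fsetU1; last by rewrite !inE rt.
by rewrite big_seq_fset1 /= !GRing.addrA.
Qed.

Lemma sum3 {G : choiceType} (R : nzRingType) (F : G -> R) (p q r : G) :
  p != q -> p != r -> q != r ->
  (\sum_(h <- [fset p; q; r; p]) F h = F p + F q + F r)%R.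
Proof.
move=> pq pr qr.
have -> : [fset p; q; r; p] = p |` (q |` [fset r]).
  by apply/fsetP => h; rewrite !inE; case: (h == p); case: (h == q); case: (h == r).
rewrite big_fsetU1; last by rewrite !inE negb_or pq pr.
rewrite big_fsetU1; last by rewrite !inE qr.
by rewrite big_seq_fset1 /= !GRing.addrA.
Qed.

Theorem mainTheorem15 (G : choiceType) (mul : G -> G -> G) (one : G)
  (inv : G -> G) (F : fieldType) (a b : grpalg G F) (x y : G) :
  group_laws mul one inv ->
  torsion_free mul one ->
  zero_divisor mul inv a ->
  supp a = [fset one; x; y; mul x y] ->
  x != y -> x != one -> y != one ->
  mate mul inv a b ->
  #|` setmul mul (supp a) (supp b)| <= 2 * #|` supp b| - 2.
Proof.
move=> GL TF _ Sa xy x1 y1 [bnz [ab0 _]].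
have [b0 b0B] := fset0Pn _ bnz.
have Bm : forall g, (g \in supp b) = (b g != 0%R) by move=> g; rewrite suppP.
have anz : forall h, h \in supp a -> a h != 0%R by move=> h; rewrite suppP.
have ainS : forall h, h \in [fset one; x; y; mul x y] -> a h != 0%R.
  by move=> h; rewrite -Sa; apply: anz.
have i1 : inv one = one := inv1 GL.
have M1 := g_mul1 GL.
case: (eqVneq (mul x y) one) => xy1.
  exfalso.
  have ivy : inv y = x by symmetry; apply: (inv_uniq GL).
  have H : forall g, (a one * b g + a x * b (mul x g) * 0 + a x * b (mul (inv x) g)
       + a y * b (mul x g))%R = 0%R.
    move=> g; rewrite GRing.mulr0 GRing.addr0 -(ab0 g) /ga_mul_at Sa xy1.
    rewrite sum3 ?i1 ?M1 ?ivy //; first by rewrite eq_sym.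
    by rewrite eq_sym.
  have [k [kB kN]] := top GL TF x1 b0B.
  set c := mul (gpow mul one x k) b0 in kB kN.
  have nB : forall g, g \notin supp b -> b g = 0%R.
    by move=> g; rewrite Bm => /negPn/eqP.
  move: (H (mul x c)); rewrite (mulKg GL).
  have E1 : mul x c = mul (gpow mul one x 1) c by rewrite (gpowSm GL) (gpow0m GL).
  have E2 : mul x (mul x c) = mul (gpow mul one x 2) c.
    by rewrite !(gpowSm GL) (gpow0m GL).
  rewrite E2 {1}E1 (nB _ (kN 1)) (nB _ (kN 0)) !GRing.mulr0 GRing.add0r !GRing.addr0.
  move/eqP; rewrite GRing.add0r GRing.mulf_eq0 (negbTE (ainS x _)) /=.
    by apply/negP; rewrite -Bm.
  by rewrite !inE eqxx orbT.
have n1 : a one != 0%R by apply: ainS; rewrite !inE eqxx.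
have nx : a x != 0%R by apply: ainS; rewrite !inE eqxx orbT.
have ny : a y != 0%R by apply: ainS; rewrite !inE eqxx orbT.
have nxy : a (mul x y) != 0%R by apply: ainS; rewrite !inE eqxx orbT.
rewrite Sa; apply: (main4 GL TF x1 y1 n1 nx ny nxy Bm b0B).
move=> g; rewrite -(ab0 g) /ga_mul_at Sa sum4 ?i1 ?M1 //.
- by rewrite eq_sym.
- by rewrite eq_sym.
- by rewrite eq_sym.
- apply: contra y1 => /eqP E; apply/eqP; apply: (mulgI GL (a:=x)).
  by rewrite -E (g_1mul GL).
- apply: contra x1 => /eqP E; apply/eqP; apply: (mulIg GL (a:=y)).
  by rewrite -E M1.
Qed.
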